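(* Let $k \geq 1$ and $m \geq 0$ be integers and put $n = 2k+m$. The number of Riordan paths of length $n$ having exactly $m$ flat steps and exactly $k$ up steps (and hence exactly $k$ down steps) equals $f^{(k,k,1^m)}$, the number of standard Young tableaux of shape $(k,k,1^m)$.
   Context: A Motzkin path of length $n$ is a lattice path from $(0,0)$ to $(n,0)$ using steps $U=(1,1)$, $F=(1,0)$ (flat), $D=(1,-1)$ that never goes below the $x$-axis. A Riordan path is a Motzkin path with no flat step $F$ on the $x$-axis (i.e. every $F$ is preceded by strictly more $U$'s than $D$'s). For a partition $\mu$, $f^\mu$ denotes the number of standard Young tableaux of shape $\mu$; $(k,k,1^m)$ is the partition with two parts equal to $k$ followed by $m$ parts equal to $1$. *)

(* Defs.v *)
From HB Require Import structures.
From mathcomp Require Import all_boot all_order all_algebra.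
Set Implicit Arguments. Unset Strict Implicit. Unset Printing Implicit Defensive.
Import GRing.Theory Num.Theory.

(* Steps of a Motzkin path: U = (1,1), F = (1,0), D = (1,-1). *)
Inductive step := U | F | D.

Definition step_to_ord (s : step) : 'I_3 :=
  match s with U => inord 0 | F => inord 1 | D => inord 2 end.
Definition ord_to_step (i : 'I_3) : step :=
  match val i with 0 => U | 1 => F | _ => D end.
Lemma stepK : cancel step_to_ord ord_to_step.
Proof. by case; rewrite /ord_to_step /= inordK. Qed.
HB.instance Definition _ := Finite.copy step (can_type stepK).

Definition dy (s : step) : int := match s with U => 1 | F => 0 | D => -1 end%R.

Definition height (w : seq step) : int := (\sum_(s <- w) dy s)%R.

Definition motzkin (w : seq step) : bool :=
  [forall i : 'I_(size w).+1, (0 <= height (take i w))%R] && (height w == 0%R).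

Definition riordan (w : seq step) : bool :=
  motzkin w &&
  [forall i : 'I_(size w), (nth U w i == F) ==> (0 < height (take i w))%R].

Definition riordan_paths (n k m : nat) : {set n.-tuple step} :=
  [set w : n.-tuple step | [&& riordan w, count_mem U w == k & count_mem F w == m]].

(* Young diagrams and standard Young tableaux.  A partition is given as the
   nonincreasing sequence of its (positive) parts.  Cells are pairs (r,c)
   (0-based) with r < size la and c < la_r. *)
Definition cell (la : seq nat) :=
  {x : 'I_(size la) * 'I_(head 0 la) | x.2 < nth 0 la x.1}.

(* A standard Young tableau of shape la: a bijection from the cells onto
   {0,...,|la|-1} (i.e. entries 1..|la| shifted by one) increasing along rows
   and down columns. *)
Definition is_syt (la : seq nat) (t : {ffun cell la -> 'I_(sumn la)}) : bool :=
  [&& injectiveb t,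
      [forall j : 'I_(sumn la), exists c : cell la, t c == j],
      [forall a : cell la, forall b : cell la,
          (((val a).1 == (val b).1) && ((val a).2 < (val b).2)) ==> (t a < t b)] &
      [forall a : cell la, forall b : cell la,
          (((val a).2 == (val b).2) && ((val a).1 < (val b).1)) ==> (t a < t b)]].

Definition num_syt (la : seq nat) : nat :=
  #|[set t : {ffun cell la -> 'I_(sumn la)} | is_syt t]|.

Definition hook2 (k m : nat) : seq nat := [:: k, k & nseq m 1].

(* Main.v *)
Require Import Defs.
From mathcomp Require Import all_boot all_order all_algebra.
From mathcomp Require Import zify.
Set Implicit Arguments. Unset Strict Implicit. Unset Printing Implicit Defensive.

Module PartA.

Fixpoint allw (n : nat) : seq (seq step) :=
  if n is n'.+1 then
    let a := allw n' in map (cons U) a ++ map (cons F) a ++ map (cons D) a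
  else [:: [::]].

Lemma mem_map_cons (t s : step) w a :
  (s :: w \in map (cons t) a) = (s == t) && (w \in a).
Proof.
apply/mapP/andP => [[x xa [-> ->]]|[/eqP -> wa]]; last by exists w.
by split.
Qed.

Lemma nil_map_cons (t : step) a : ([::] \in map (cons t) a) = false.
Proof. by apply/mapP => -[]. Qed.

Lemma stepE (a b : step) : (a == b) =
  match a, b with U, U | F, F | D, D => true | _, _ => false end.
Proof. by case: a; case: b => //; apply/eqP. Qed.

Lemma mem_allw n w : (w \in allw n) = (size w == n).
Proof.
elim: n w => [|n IH] [|s w] //=; rewrite !mem_cat ?nil_map_cons //.
by rewrite !mem_map_cons IH eqSS; case: s; rewrite !stepE /= ?orbF.
Qed.

Lemma uniq_allw n : uniq (allw n).
Proof.
have ci : forall t : step, injective (cons t) by move=> t x y [].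
elim: n => [|n IH] //=.
rewrite !cat_uniq !map_inj_uniq //= IH /= !andbT.
apply/andP; split; last by apply/hasPn => x /mapP [y _ ->]; rewrite mem_map_cons stepE.
rewrite has_cat negb_or; apply/andP; split; apply/hasPn => x /mapP [y _ ->];
  by rewrite mem_map_cons stepE.
Qed.

Lemma card_allw n (P : pred (seq step)) :
  #|[set w : n.-tuple step | P w]| = count P (allw n).
Proof.
rewrite cardsE cardE /enum_mem size_filter -enumT.
have /permP -> : perm_eq (allw n) (map val (enum {: n.-tuple step})).
  apply/uniq_perm; first exact: uniq_allw.
    by rewrite map_inj_uniq ?enum_uniq //; exact: val_inj.
  move=> x; rewrite mem_allw; apply/idP/mapP => [/eqP h|[y _ ->]].
    by exists (Tuple (introT eqP h)) => //; rewrite mem_enum.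
  by rewrite size_tuple.
by rewrite [RHS]count_map; congr count.
Qed.

End PartA.
Import PartA.

Module PartB.

Definition cnt (P : seq step -> bool) n k m :=
  count (fun w => P w && (count_mem U w == k) && (count_mem F w == m)) (allw n).

Lemma cnt0 P k m : cnt P 0 k m = P [::] && (k == 0) && (m == 0).
Proof. by rewrite /cnt /= addn0; case: k; case: m; case: (P [::]). Qed.

Lemma cntS P n k m : cnt P n.+1 k m =
  (if k is k'.+1 then cnt (fun w => P (U :: w)) n k' m else 0) +
  (if m is m'.+1 then cnt (fun w => P (F :: w)) n k m' else 0) +
  cnt (fun w => P (D :: w)) n k m.
Proof.
rewrite /cnt /= !count_cat !count_map addnA; congr (_ + _ + _).
- case: k => [|k]; first by apply/eqP; rewrite -leqn0 leqNgt -has_count; apply/hasPn => w _ /=; rewrite !stepE /= andbF.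
  by apply: eq_count => w /=; rewrite !stepE /= eqSS.
- case: m => [|m]; first by apply/eqP; rewrite -leqn0 leqNgt -has_count; apply/hasPn => w _ /=; rewrite !stepE /= andbF.
  by apply: eq_count => w /=; rewrite !stepE /= eqSS.
- by apply: eq_count => w /=; rewrite !stepE /=.
Qed.

Lemma cnt_ext P Q n k m : P =1 Q -> cnt P n k m = cnt Q n k m.
Proof. by move=> e; apply: eq_count => w; rewrite e. Qed.

Lemma cnt_and (b : bool) P n k m : cnt (fun w => b && P w) n k m = b * cnt P n k m.
Proof. by case: b; rewrite ?mul1n ?mul0n //; rewrite /cnt; elim: (allw n). Qed.

Lemma cnt_false n k m : cnt (fun _ => false) n k m = 0.
Proof. by rewrite /cnt; elim: (allw n). Qed.

Fixpoint rB (h : nat) (w : seq step) : bool :=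
  match w with
  | [::] => h == 0
  | U :: w' => rB h.+1 w'
  | F :: w' => (0 < h) && rB h w'
  | D :: w' => (0 < h) && rB h.-1 w'
  end.

Fixpoint mP (h : nat) (w : seq step) : bool :=
  match w with
  | [::] => h == 0
  | U :: w' => mP h.+1 w'
  | F :: w' => mP h w'
  | D :: w' => (0 < h) && mP h.-1 w'
  end.

Fixpoint sQ (h : nat) (w : seq step) : bool :=
  match w with
  | [::] => h == 0
  | U :: w' => sQ h.+1 w'
  | F :: w' => false
  | D :: w' => (0 < h) && mP h.-1 w'
  end.

Lemma claim1 n : forall h k m, cnt (mP h) n k m =
  (if m is m'.+1 then cnt (rB h.+1) n k m' else 0) + cnt (rB h) n k m.
Proof.
elim: n => [|n IH] h k m.
  by rewrite !cnt0; case: m => [|m] /=; rewrite ?andbF //.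
rewrite !cntS /= !cnt_and.
case: k => [|k]; case: m => [|m]; rewrite ?cntS /= ?cnt_and !IH; case: h => [|h] /=;
  try case: m => [|m]; rewrite /cnt /=; lia.
Qed.

Lemma claim2 n : forall h k m, cnt (sQ h) n k m = cnt (rB h) n k m.
Proof.
elim: n => [|n IH] h k m; first by rewrite !cnt0.
rewrite !cntS /=; case: m => [|m]; rewrite ?cnt_false !cnt_and;
case: h => [|h] /=; rewrite ?mul0n ?mul1n ?claim1; case: k => [|k]; rewrite ?IH /cnt /=; lia.
Qed.

End PartB.
Import PartB.

Module PartC.
Import GRing.Theory Num.Theory.
Local Open Scope ring_scope.

Lemma forall_iota n (P : nat -> bool) : [forall i : 'I_n, P i] = all P (iota 0 n).
Proof.
apply/forallP/allP => [H i|H i].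
  by rewrite mem_iota add0n => /andP [_ lt]; exact: (H (Ordinal lt)).
by apply: H; rewrite mem_iota add0n ltn_ord.
Qed.

Lemma all_iotaS n (P : nat -> bool) :
  all P (iota 0 n.+1) = P 0 && all (fun i => P i.+1) (iota 0 n).
Proof. by rewrite /= -[1%N]/(1 + 0)%N iotaDl all_map. Qed.

Lemma height_nil : height [::] = 0%R.
Proof. by rewrite /height big_nil. Qed.

Lemma height_cons s w : height (s :: w) = (dy s + height w)%R.
Proof. by rewrite /height big_cons. Qed.

Lemma takeS (x : step) s i : take i.+1 (x :: s) = x :: take i s. Proof. by []. Qed.
Lemma nthS (x : step) s i : nth U (x :: s) i.+1 = nth U s i. Proof. by []. Qed.

Local Arguments iota : simpl never.
Lemma rB_iff w : forall h : nat, rB h w =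
  [&& all (fun i => 0 <= (Posz h) + height (take i w))%R (iota 0 (size w).+1),
      (Posz h) + height w == 0 &
      all (fun i => (nth U w i == F) ==> (0 < (Posz h) + height (take i w)))%R
          (iota 0 (size w))].
Proof.
elim: w => [|s w IH] h.
  by rewrite /= height_nil addr0 !andbT; case: h.
rewrite -[size (s :: w)]/(size w).+1.
rewrite [X in _ = [&& X, _ & _]](all_iotaS (size w).+1).
rewrite [X in _ = [&& _, _ & X]](all_iotaS (size w)).
rewrite take0 height_nil addr0 [nth U _ 0]/= height_cons.
under [in RHS]eq_all do rewrite takeS height_cons.
under [in X in _ = [&& _, _ & X]]eq_all => i do rewrite takeS nthS height_cons.
have eUF : (U == F) = false by rewrite stepE.
have eDF : (D == F) = false by rewrite stepE.
case: s; rewrite [rB _ _]/= ?IH [dy _]/= ?eUF ?eDF ?eqxx ?implyFb ?implyTb ?andbT.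
- have e : forall x : int, Posz h + (1 + x) = Posz h.+1 + x by move=> x; lia.
  under [in RHS]eq_all do rewrite e.
  under [in X in _ = [&& _, _ & X]]eq_all => i do rewrite e.
  have -> : (0 <= Posz h)%R = true by lia.
  by rewrite e !andTb.
- have e : forall x : int, Posz h + (0 + x) = Posz h + x by move=> x; lia.
  under [in RHS]eq_all do rewrite e.
  under [in X in _ = [&& _, _ & X]]eq_all => i do rewrite e.
  have -> : (0 <= Posz h)%R = true by lia.
  have -> : (0 < Posz h)%R = (0 < h)%N by lia.
  by rewrite e !andTb; case: (0 < h)%N; rewrite ?andbF ?andbT ?andFb.
- case: h => [|h].
    by rewrite [in RHS](all_iotaS (size w)) take0 height_nil.
  have e : forall x : int, Posz h.+1 + (-1 + x) = Posz h + x by move=> x; lia.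
  under [in RHS]eq_all do rewrite e.
  under [in X in _ = [&& _, _ & X]]eq_all => i do rewrite e.
  have -> : (0 <= Posz h.+1)%R = true by lia.
  by rewrite e !andTb.
Qed.

Lemma riordanE (w : seq step) : riordan w = rB 0 w.
Proof.
rewrite rB_iff /riordan /motzkin.
rewrite (forall_iota (size w).+1 (fun i => 0 <= height (take i w))).
rewrite (forall_iota (size w) (fun i => (nth U w i == F) ==> (0 < height (take i w)))).
under [in RHS]eq_all do rewrite add0r.
under [in X in _ = [&& _, _ & X]]eq_all => i do rewrite add0r.
by rewrite add0r andbA.
Qed.

End PartC.
Import PartC.

Module PartD.

Definition cntp (r : step) j (w : seq step) := count_mem r (take j w).

Fixpoint posl (r : step) (w : seq step) : seq nat :=
  match w with
  | [::] => [::]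
  | s :: w' => (if s == r then [:: 0] else [::]) ++ map S (posl r w')
  end.

Definition pos r i w := nth 0 (posl r w) i.

Lemma size_posl r w : size (posl r w) = count_mem r w.
Proof. by elim: w => //= s w IH; case: (s == r); rewrite /= size_map IH. Qed.

Lemma cntp0 r w : cntp r 0 w = 0.
Proof. by rewrite /cntp take0. Qed.

Lemma cntpS r s w j : cntp r j.+1 (s :: w) = (s == r) + cntp r j w.
Proof. by []. Qed.

Lemma posL r w : forall i, i < count_mem r w ->
  [/\ pos r i w < size w, nth U w (pos r i w) = r & cntp r (pos r i w) w = i].
Proof.
rewrite /pos; elim: w => [|s w IH] i //=.
have hs := size_posl r w.
case: (eqVneq s r) => [->|ne] /=.
  case: i => [|i] /=; first by rewrite cntp0.
  rewrite add1n ltnS => lt; rewrite (nth_map 0) ?hs //.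
  by case: (IH _ lt) => a b c; rewrite cntpS eqxx c.
rewrite add0n => lt; rewrite (nth_map 0) ?hs //.
by case: (IH _ lt) => a b c; rewrite cntpS (negbTE ne) c.
Qed.

Lemma posR r w : forall j, j < size w -> nth U w j = r ->
  pos r (cntp r j w) w = j /\ cntp r j w < count_mem r w.
Proof.
rewrite /pos; elim: w => [|s w IH] j //=.
have hs := size_posl r w.
case: j => [|j] /=.
  by move=> _ e; subst r; rewrite cntp0 eqxx.
rewrite ltnS => lt e; case: (IH _ lt e) => a b.
rewrite cntpS; case E: (s == r).
  by rewrite /= add1n (nth_map 0) ?hs // a.
by rewrite /= add0n (nth_map 0) ?hs // a.
Qed.

Lemma cntp_mono r w j j' : j <= j' -> cntp r j w <= cntp r j' w.
Proof.
move=> le; rewrite /cntp -(take_takel w le).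
rewrite -{2}(cat_take_drop j (take j' w)) count_cat; exact: leq_addr.
Qed.

Lemma cntp_step r w j : j < size w -> nth U w j = r -> cntp r j.+1 w = (cntp r j w).+1.
Proof.
move=> lt e; rewrite /cntp (take_nth U lt) -cats1 count_cat e /= eqxx; lia.
Qed.

Lemma pos_lt r w c j : c < count_mem r w -> (pos r c w < j) = (c < cntp r j w).
Proof.
move=> lt; case: (posL lt) => a b e.
apply/idP/idP => H.
  have := cntp_mono r w H; rewrite (cntp_step a b) e; lia.
rewrite ltnNge; apply/negP => H2; have := cntp_mono r w H2; rewrite e; lia.
Qed.

Lemma pos_mono r w i1 i2 : i1 < i2 -> i2 < count_mem r w -> pos r i1 w < pos r i2 w.
Proof.
move=> lt l2; rewrite pos_lt; last by lia.
by case: (posL l2) => _ _ ->.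
Qed.

End PartD.
Import PartD.

Module PartE.

Lemma cmS (r s : step) w : count_mem r (s :: w) = (s == r) + count_mem r w.
Proof. by []. Qed.

Lemma eUD : (U == D) = false. Proof. by rewrite stepE. Qed.
Lemma eDU : (D == U) = false. Proof. by rewrite stepE. Qed.
Lemma eUF : (U == F) = false. Proof. by rewrite stepE. Qed.
Lemma eFU : (F == U) = false. Proof. by rewrite stepE. Qed.
Lemma eDF : (D == F) = false. Proof. by rewrite stepE. Qed.
Lemma eFD : (F == D) = false. Proof. by rewrite stepE. Qed.

Local Arguments iota : simpl never.
Lemma mP_iff w : forall h, mP h w =
  all (fun j => cntp D j w <= h + cntp U j w) (iota 0 (size w).+1) &&
  (count_mem D w == h + count_mem U w).
Proof.
elim: w => [|s w IH] h.
  by rewrite /= /cntp /=; case: h.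
rewrite -[size (s :: w)]/(size w).+1 (all_iotaS (size w).+1) !cntp0 addn0 leq0n andTb [mP _ _]/=.
under eq_all do rewrite !cntpS.
rewrite ?cmS.
case: s; rewrite ?eUD ?eDU ?eUF ?eFU ?eDF ?eFD ?eqxx.
- have e : forall x y, (0 + x <= h + (1 + y)) = (x <= h.+1 + y).
    by move=> x y; apply/idP/idP; lia.
  under eq_all do rewrite e.
  have -> : (0 + count_mem D w == h + (1 + count_mem U w)) =
            (count_mem D w == h.+1 + count_mem U w) by apply/idP/idP => /eqP H; apply/eqP; lia.
  by rewrite IH.
- have e : forall x y, (0 + x <= h + (0 + y)) = (x <= h + y).
    by move=> x y; apply/idP/idP; lia.
  under eq_all do rewrite e.
  have -> : (0 + count_mem D w == h + (0 + count_mem U w)) =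
            (count_mem D w == h + count_mem U w) by apply/idP/idP => /eqP H; apply/eqP; lia.
  by rewrite IH.
- case: h => [|h].
    by rewrite (all_iotaS (size w)) !cntp0.
  have e : forall x y, (1 + x <= h.+1 + (0 + y)) = (x <= h + y).
    by move=> x y; apply/idP/idP; lia.
  under eq_all do rewrite e.
  have -> : (1 + count_mem D w == h.+1 + (0 + count_mem U w)) =
            (count_mem D w == h + count_mem U w) by apply/idP/idP => /eqP H; apply/eqP; lia.
  by rewrite IH.
Qed.

Definition Fcond (w : seq step) :=
  all (fun j => (nth U w j == F) ==> (0 < cntp D j w)) (iota 0 (size w)).

Lemma sQ_iff w : forall h, sQ h w = mP h w && Fcond w.
Proof.
rewrite /Fcond; elim: w => [|s w IH] h; first by rewrite /= andbT.
rewrite -[size (s :: w)]/(size w).+1 (all_iotaS (size w)) !cntp0.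
under eq_all do rewrite cntpS nthS.
case: s; rewrite ?eUD ?eDU ?eUF ?eFU ?eDF ?eFD ?eqxx [sQ _ _]/= [mP _ _]/=.
- rewrite IH implyFb andTb; congr (_ && _).
- by case: (mP h w).
- have -> : all (fun j => (nth U w j == F) ==> (0 < true + cntp D j w)) (iota 0 (size w)) = true.
    by apply/allP => j _; apply/implyP => _; lia.
  by rewrite implyFb !andbT.
Qed.

Definition Good k m (w : seq step) :=
  [&& count_mem U w == k, count_mem D w == k, count_mem F w == m,
      all (fun c => pos U c w < pos D c w) (iota 0 k) &
      (0 < m) ==> (pos D 0 w < pos F 0 w)].

Lemma cntp_le r j w : cntp r j w <= count_mem r w.
Proof. by rewrite /cntp -{2}(cat_take_drop j w) count_cat leq_addr. Qed.

Lemma cntp_step_ne r w j : nth U w j != r -> cntp r j.+1 w = cntp r j w.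
Proof.
move=> ne; case: (ltnP j (size w)) => lt.
  rewrite /cntp (take_nth U lt) -cats1 count_cat /=.
  by rewrite (negbTE ne) /= !addn0.
by rewrite /cntp !take_oversize // (leqW lt).
Qed.

Lemma goodE k m w : 0 < k ->
  Good k m w = [&& sQ 0 w, count_mem U w == k & count_mem F w == m].
Proof.
move=> k0; rewrite sQ_iff mP_iff /Good /Fcond.
apply/idP/idP.
- case/and5P => /eqP cU /eqP cD /eqP cF /allP A B.
  rewrite cU cF cD !eqxx !andbT; apply/andP; split.
    apply/allP => j _; rewrite add0n.
    case E: (cntp D j w) => [//|d].
    have dk : d < k by have := cntp_le D j w; lia.
    have h1 : pos D d w < j by rewrite pos_lt ?cD // E.
    have h2 := A d; rewrite mem_iota add0n dk /= in h2.
    have : pos U d w < j by have := h2 isT; lia.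
    by rewrite pos_lt ?cU.
  apply/allP => j; rewrite mem_iota add0n => /= lt; apply/implyP => /eqP nF.
  have c1 := cntp_step lt nF.
  have m0 : 0 < m by have := cntp_le F j.+1 w; lia.
  have h1 : pos F 0 w < j.+1 by rewrite pos_lt ?cF // c1.
  rewrite m0 /= in B.
  by rewrite -pos_lt ?cD //; lia.
- case/and3P => /andP [/andP [/allP Bal /eqP cDU] /allP Fc] /eqP cU /eqP cF.
  rewrite add0n cU in cDU.
  rewrite cU cF cDU !eqxx /=; apply/andP; split.
    apply/allP => c; rewrite mem_iota add0n => /= ck.
    have ck' : c < count_mem D w by rewrite cDU.
    case: (posL ck') => p1 p2 p3.
    have := Bal (pos D c w).+1; rewrite mem_iota add0n ltnS p1 => /(_ isT).
    rewrite add0n (cntp_step p1 p2) (@cntp_step_ne U w (pos D c w)) ?p2 ?eDU // p3 => H.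
    by rewrite pos_lt ?cU.
  apply/implyP => m0.
  have m0' : 0 < count_mem F w by rewrite cF.
  case: (posL m0') => p1 p2 p3.
  have := Fc (pos F 0 w); rewrite mem_iota add0n p1 p2 eqxx => /(_ isT) /=.
  by rewrite -pos_lt ?cDU.
Qed.

End PartE.
Import PartE.

Module PartF.

Definition rr k m (x : cell (hook2 k m)) : nat := (val x).1.
Definition cc k m (x : cell (hook2 k m)) : nat := (val x).2.

Definition cls k m (x : cell (hook2 k m)) : step :=
  if rr x == 0 then U else if rr x == 1 then D else F.
Definition idx k m (x : cell (hook2 k m)) : nat :=
  if rr x <= 1 then cc x else rr x - 2.
Definition sz (k m : nat) (r : step) : nat := match r with U | D => k | F => m end.

Lemma cell_facts k m (x : cell (hook2 k m)) :
  [/\ rr x < m.+2, cc x < k & (1 < rr x -> cc x = 0)].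
Proof.
case: x => [[r c] /= H]; rewrite /rr /cc /=.
have hr : (r < m.+2)%N by apply: (leq_trans (ltn_ord r)); rewrite /= size_nseq.
have hc := ltn_ord c.
split => // r2; move: H; case: (nat_of_ord r) r2 hr => [|[|r']] //= _ hr.
by rewrite nth_nseq; case: ifP => _; lia.
Qed.

Definition mk k m (x0 : cell (hook2 k m)) (r : step) (i : nat) : cell (hook2 k m) :=
  let rc := match r with U => (0, i) | D => (1, i) | F => (i.+2, 0) end in
  insubd x0 (insubd (val x0).1 rc.1, insubd (val x0).2 rc.2).

Lemma mk_val k m (x0 : cell (hook2 k m)) r i : i < sz k m r ->
  rr (mk x0 r i) = (match r with U => 0 | D => 1 | F => i.+2 end) /\
  cc (mk x0 r i) = (match r with U | D => i | F => 0 end).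
Proof.
have [h1 h2 h3] := cell_facts x0.
have Hlt : forall j, (j < size (hook2 k m)) = (j < m.+2) by move=> j; rewrite /= size_nseq.
move=> hi.
set rc := (match r with U => (0, i) | D => (1, i) | F => (i.+2, 0) end).
have ha : rc.1 < size (hook2 k m) by rewrite Hlt /rc; case: (r) hi => /=.
have hb : rc.2 < k by rewrite /rc; case: (r) hi => //= _; lia.
have va : val (insubd (val x0).1 rc.1) = rc.1 by rewrite val_insubd ha.
have vb : val (insubd (val x0).2 rc.2) = rc.2 by rewrite val_insubd hb.
have hc : rc.2 < nth 0 (hook2 k m) rc.1.
  by rewrite /rc; case: (r) hi => //= hi; rewrite nth_nseq hi.
rewrite /mk /rr /cc -/rc val_insubd /= va vb hc /= va vb.
by rewrite /rc; case: (r).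
Qed.

Lemma idx_lt k m (x : cell (hook2 k m)) : idx x < sz k m (cls x).
Proof.
have [h1 h2 h3] := cell_facts x.
rewrite /idx /cls; case: (rr x) h1 h3 => [|[|r]] //= h1 h3; lia.
Qed.

Lemma mkK1 k m (x0 : cell (hook2 k m)) r i : i < sz k m r ->
  cls (mk x0 r i) = r /\ idx (mk x0 r i) = i.
Proof.
move=> hi; have [e1 e2] := mk_val x0 hi.
rewrite /cls /idx e1 e2; case: r {e1 e2 hi} => //=; split => //; lia.
Qed.

Lemma mkK2 k m (x0 : cell (hook2 k m)) (x : cell (hook2 k m)) :
  mk x0 (cls x) (idx x) = x.
Proof.
have [e1 e2] := mk_val x0 (idx_lt x).
have [h1 h2 h3] := cell_facts x.
apply: val_inj.
rewrite [val (mk _ _ _)]surjective_pairing [val x]surjective_pairing.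
move: e1 e2; rewrite /rr /cc => e1 e2.
congr pair; apply: val_inj => /=; [rewrite e1 | rewrite e2]; move: h1 h2 h3;
  rewrite /cls /idx /rr /cc.
  by case: ((val x).1 : nat) => [|[|r]] //=; lia.
by case: ((val x).1 : nat) => [|[|r]] //= _ _ ->.
Qed.

Definition rowc k m (a b : cell (hook2 k m)) :=
  ((val a).1 == (val b).1) && ((val a).2 < (val b).2).
Definition colc k m (a b : cell (hook2 k m)) :=
  ((val a).2 == (val b).2) && ((val a).1 < (val b).1).

Lemma rowcE k m (a b : cell (hook2 k m)) :
  rowc a b = [&& cls a == cls b, cls a != F & idx a < idx b].
Proof.
have [ha1 ha2 ha3] := cell_facts a; have [hb1 hb2 hb3] := cell_facts b.
have ea : ((val a).1 == (val b).1) = (rr a == rr b) by [].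
rewrite /rowc ea -/(cc a) -/(cc b) /cls /idx.
case: (rr a) ha3 => [|[|ra]] ha3; case: (rr b) hb3 => [|[|rb]] hb3;
  rewrite /= ?eUD ?eDU ?eUF ?eFU ?eDF ?eFD ?eqxx ?andbF //=.
by rewrite ha3 ?hb3 // andbF.
Qed.

Lemma colcE k m (a b : cell (hook2 k m)) :
  colc a b = [|| [&& cls a == U, cls b == D & idx a == idx b],
                 [&& cls a == U, idx a == 0 & cls b == F],
                 [&& cls a == D, idx a == 0 & cls b == F] |
                 [&& cls a == F, cls b == F & idx a < idx b]].
Proof.
have [ha1 ha2 ha3] := cell_facts a; have [hb1 hb2 hb3] := cell_facts b.
have ea : ((val a).2 == (val b).2) = (cc a == cc b) by [].
rewrite /colc ea -/(rr a) -/(rr b) /cls /idx.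
case: (rr a) ha3 => [|[|ra]] ha3; case: (rr b) hb3 => [|[|rb]] hb3;
  rewrite /= ?eUD ?eDU ?eUF ?eFU ?eDF ?eFD ?eqxx /=;
  try (rewrite (ha3 isT)); try (rewrite (hb3 isT)); rewrite ?andbF ?orbF ?andbT //=.
all: apply/idP/idP; lia.
Qed.

End PartF.
Import PartF.

Module PartG.

Lemma mem_posl r w j : (j \in posl r w) = (j < size w) && (nth U w j == r).
Proof.
elim: w j => [|s w IH] j //=.
rewrite mem_cat; case: j => [|j] /=.
  case: (s == r); rewrite //= ?orbF //.
  by apply/mapP => -[].
have -> : (j.+1 \in (if s == r then [:: 0] else [::])) = false by case: (s == r).
by rewrite /= (mem_map succn_inj) IH ltnS.
Qed.

Lemma sorted_posl r w : sorted ltn (posl r w).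
Proof.
have hs : forall l : seq nat, sorted ltn l -> sorted ltn (map S l).
  by move=> l; rewrite sorted_map; apply: sub_sorted => x y.
elim: w => [|s w IH] //=.
case: (s == r) => /=; last exact: hs.
by case: (posl r w) IH => [|y l] // IH'; have := hs _ IH'.
Qed.

Lemma syt_props la (t : {ffun cell la -> 'I_(sumn la)}) : is_syt t ->
  [/\ injective t, forall j, exists c, t c = j,
      (forall a b : cell la, ((val a).1 == (val b).1) && ((val a).2 < (val b).2) -> t a < t b) &
      (forall a b : cell la, ((val a).2 == (val b).2) && ((val a).1 < (val b).1) -> t a < t b)].
Proof.
case/and4P => /injectiveP inj /forallP su /forallP ro /forallP co; split => //.
- by move=> j; case/existsP: (su j) => c /eqP; exists c.
- by move=> a b; move/forallP: (ro a) => /(_ b) /implyP.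
- by move=> a b; move/forallP: (co a) => /(_ b) /implyP.
Qed.

Definition SYT k m := {ffun cell (hook2 k m) -> 'I_(sumn (hook2 k m))}.

Definition letter k m (t : SYT k m) (j : 'I_(sumn (hook2 k m))) : step :=
  if [pick c | t c == j] is Some c then cls c else U.

Definition Phi k m (t : SYT k m) : (sumn (hook2 k m)).-tuple step :=
  [tuple letter t j | j < sumn (hook2 k m)].

Lemma nth_Phi k m (t : SYT k m) c j : injective t -> val (t c) = j ->
  nth U (Phi t) j = cls c.
Proof.
move=> inj <-; rewrite nth_mktuple /letter.
case: pickP => [c' /eqP /inj -> //|H].
by have := H c; rewrite eqxx.
Qed.

Lemma size_Phi k m (t : SYT k m) : size (Phi t) = sumn (hook2 k m).
Proof. exact: size_tuple. Qed.

Definition sq k m (x0 : cell (hook2 k m)) (t : SYT k m) r i : nat := val (t (mk x0 r i)).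

Lemma sq_mono k m (x0 : cell (hook2 k m)) (t : SYT k m) r i j : is_syt t ->
  i < j -> j < sz k m r -> sq x0 t r i < sq x0 t r j.
Proof.
case/syt_props => _ _ ro co ij js.
have iz : i < sz k m r by lia.
have [c1 i1] := mkK1 x0 iz; have [c2 i2] := mkK1 x0 js.
case E: (r == F).
  apply: co; rewrite -/(colc _ _) colcE c1 c2 i1 i2 (eqP E) eqxx ij.
  by rewrite !orbT.
apply: ro; rewrite -/(rowc _ _) rowcE c1 c2 i1 i2 eqxx E ij.
done.
Qed.

Lemma posl_Phi k m (x0 : cell (hook2 k m)) (t : SYT k m) r : is_syt t ->
  posl r (Phi t) = map (sq x0 t r) (iota 0 (sz k m r)).
Proof.
move=> syt; have [inj su _ _] := syt_props syt.
apply: (irr_sorted_eq ltn_trans ltnn); first exact: sorted_posl.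
  apply: (@homo_sorted_in _ _ (fun i => i < sz k m r)); last exact: iota_ltn_sorted.
    by move=> i j _ js ij; apply: sq_mono.
  by apply/allP => i; rewrite mem_iota.
move=> j; rewrite mem_posl size_Phi; apply/idP/mapP.
  case/andP => jN /eqP nj.
  have [c tc] := su (Ordinal jN).
  have := nth_Phi inj (congr1 val tc); rewrite nj /= => rc.
  exists (idx c); first by rewrite mem_iota add0n /= rc idx_lt.
  by rewrite /sq rc mkK2 tc.
move=> [i]; rewrite mem_iota add0n /= => ilt ->.
have [c1 _] := mkK1 x0 ilt.
by rewrite /sq ltn_ord /= (nth_Phi (c := mk x0 r i)) // c1.
Qed.

Lemma count_Phi k m (x0 : cell (hook2 k m)) (t : SYT k m) r : is_syt t ->
  count_mem r (Phi t) = sz k m r.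
Proof. by move=> syt; rewrite -size_posl (posl_Phi x0 r syt) size_map size_iota. Qed.

Lemma pos_Phi k m (x0 : cell (hook2 k m)) (t : SYT k m) r i : is_syt t ->
  i < sz k m r -> pos r i (Phi t) = sq x0 t r i.
Proof.
by move=> syt lt; rewrite /pos (posl_Phi x0 r syt) (nth_map 0) ?size_iota // nth_iota.
Qed.

Lemma good_Phi k m (x0 : cell (hook2 k m)) (t : SYT k m) : is_syt t -> 0 < k ->
  Good k m (Phi t).
Proof.
move=> syt k0; have [_ _ _ co] := syt_props syt.
rewrite /Good !(count_Phi x0 _ syt) /= !eqxx /=; apply/andP; split.
  apply/allP => c; rewrite mem_iota add0n /= => ck.
  rewrite !(pos_Phi x0 syt) //.
  have [c1 i1] := mkK1 x0 (r := U) ck; have [c2 i2] := mkK1 x0 (r := D) ck.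
  by apply: co; rewrite -/(colc _ _) colcE c1 c2 i1 i2 !eqxx.
apply/implyP => m0; rewrite !(pos_Phi x0 syt) //.
have [c1 i1] := mkK1 x0 (r := D) k0; have [c2 i2] := mkK1 x0 (r := F) m0.
apply: co; rewrite -/(colc _ _) colcE c1 c2 i1 i2 !eqxx.
by rewrite !orbT.
Qed.

Lemma Phi_inj k m (x0 : cell (hook2 k m)) (t1 t2 : SYT k m) : is_syt t1 -> is_syt t2 ->
  Phi t1 = Phi t2 -> t1 = t2.
Proof.
move=> s1 s2 e; apply/ffunP => x; apply: val_inj.
rewrite -(mkK2 x0 x).
have := pos_Phi x0 s1 (idx_lt x); have := pos_Phi x0 s2 (idx_lt x).
by rewrite /sq e => <- <-.
Qed.

End PartG.
Import PartG.

Module PartH.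

Definition Psi k m (j0 : 'I_(sumn (hook2 k m))) (w : seq step) : SYT k m :=
  [ffun x => insubd j0 (pos (cls x) (idx x) w)].

Lemma good_count k m w r : Good k m w -> count_mem r w = sz k m r.
Proof. by case/and5P => /eqP a /eqP b /eqP c _ _; case: r. Qed.

Lemma val_Psi k m j0 w (x : cell (hook2 k m)) : Good k m w -> size w = sumn (hook2 k m) ->
  val (Psi j0 w x) = pos (cls x) (idx x) w.
Proof.
move=> g sw; rewrite ffunE val_insubd.
have lt : idx x < count_mem (cls x) w by rewrite (good_count _ g) idx_lt.
by case: (posL lt) => h _ _; rewrite (_ : _ < _ = true) //; rewrite -sw.
Qed.

Lemma nat_Psi k m j0 w (x : cell (hook2 k m)) : Good k m w -> size w = sumn (hook2 k m) ->
  nat_of_ord (Psi j0 w x) = pos (cls x) (idx x) w.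
Proof. exact: val_Psi. Qed.

Lemma Psi_surj k m j0 (x0 : cell (hook2 k m)) w : Good k m w -> size w = sumn (hook2 k m) ->
  forall j : 'I_(sumn (hook2 k m)),
  let c := mk x0 (nth U w j) (cntp (nth U w j) j w) in
  Psi j0 w c = j /\ cls c = nth U w j.
Proof.
move=> g sw j c.
have cnt := good_count _ g.
have jw : j < size w by rewrite sw.
have [pe pl] := posR jw (erefl (nth U w j)).
have il : cntp (nth U w j) j w < sz k m (nth U w j) by rewrite -cnt.
have [c1 i1] := mkK1 x0 il.
split => //; apply: val_inj; rewrite (val_Psi j0 c g sw) c1 i1 pe //.
Qed.

Lemma Psi_syt k m (j0 : 'I_(sumn (hook2 k m))) (x0 : cell (hook2 k m)) w : Good k m w ->
  size w = sumn (hook2 k m) -> is_syt (@Psi k m j0 w).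
Proof.
move=> g sw.
have cnt := good_count _ g.
have P1 : forall x : cell (hook2 k m),
    [/\ pos (cls x) (idx x) w < size w, nth U w (pos (cls x) (idx x) w) = cls x &
        cntp (cls x) (pos (cls x) (idx x) w) w = idx x].
  by move=> x; apply: posL; rewrite cnt idx_lt.
have mono : forall r i1 i2, i1 < i2 -> i2 < sz k m r -> pos r i1 w < pos r i2 w.
  by move=> r i1 i2 a b; apply: pos_mono; rewrite ?cnt.
apply/and4P; split.
- apply/injectiveP => x y /(congr1 val); rewrite !val_Psi // => e.
  have [_ n1 c1] := P1 x; have [_ n2 c2] := P1 y.
  have ec : cls x = cls y by rewrite -n1 -n2 e.
  have ei : idx x = idx y by rewrite -c1 -c2 e ec.
  by rewrite -(mkK2 x x) -(mkK2 x y) ec ei.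
- apply/forallP => j; apply/existsP.
  have [e _] := Psi_surj j0 x0 g sw j.
  by eexists; apply/eqP; exact: e.
- apply/forallP => a; apply/forallP => b; apply/implyP.
  rewrite -/(rowc _ _) rowcE => /and3P [/eqP e _ lt].
  rewrite !nat_Psi // e; apply: mono => //.
  exact: (idx_lt b).
- apply/forallP => a; apply/forallP => b; apply/implyP.
  rewrite -/(colc _ _) colcE !nat_Psi //.
  have [g1 g2 g3 /allP g4 g5] := and5P g.
  have ib := idx_lt b.
  have ia := idx_lt a.
  have le0 : forall r i, i < sz k m r -> pos r 0 w <= pos r i w.
    by move=> r [|i] // h; apply: ltnW; apply: mono.
  case/or4P.
  + case/and3P => /eqP ea /eqP eb /eqP ei.
    rewrite ea eb ei; apply: g4; rewrite mem_iota add0n /=.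
    by move: ib; rewrite eb.
  + case/and3P => /eqP ea /eqP ei /eqP eb.
    rewrite eb in ib; rewrite ea in ia; rewrite ea eb ei.
    have m0 : 0 < m by move: ib => /=; lia.
    have k0 : 0 < k by move: ia => /=; lia.
    rewrite m0 /= in g5.
    have h1 := g4 0; rewrite mem_iota add0n /= k0 in h1.
    have h2 := le0 F _ ib.
    have := h1 isT; lia.
  + case/and3P => /eqP ea /eqP ei /eqP eb.
    rewrite eb in ib; rewrite ea in ia; rewrite ea eb ei.
    have m0 : 0 < m by move: ib => /=; lia.
    rewrite m0 /= in g5.
    have h2 := le0 F _ ib.
    lia.
  + case/and3P => /eqP -> /eqP e lt.
    by rewrite e; apply: mono => //; rewrite -e.
Qed.

End PartH.
Import PartH.

Lemma Phi_Psi k m (j0 : 'I_(sumn (hook2 k m))) (x0 : cell (hook2 k m)) w : Good k m w -> size w = sumn (hook2 k m) ->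
  val (Phi (@Psi k m j0 w)) = w.
Proof.
move=> g sw; have syt := Psi_syt j0 x0 g sw.
have [inj _ _ _] := syt_props syt.
apply: (@eq_from_nth _ U); first by rewrite size_Phi.
move=> i; rewrite size_Phi => iN.
have [e c] := Psi_surj j0 x0 g sw (Ordinal iN).
by rewrite (nth_Phi inj (congr1 val e)) c.
Qed.

Lemma sumn_hook k m : sumn (hook2 k m) = 2 * k + m.
Proof. by rewrite /= (_ : sumn (nseq m 1) = m); [lia | elim: m => //= m ->]. Qed.

Theorem proposition1p2 (k m : nat) : 1 <= k ->
  #|riordan_paths (2 * k + m) k m| = num_syt (hook2 k m).
Proof.
case: k => [//|k] _.
pose x0 : cell (hook2 k.+1 m) :=
  exist _ (Ordinal (isT : 0 < size (hook2 k.+1 m)), Ordinal (isT : 0 < head 0 (hook2 k.+1 m))) isT.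
pose j0 : 'I_(sumn (hook2 k.+1 m)) := Ordinal (isT : 0 < sumn (hook2 k.+1 m)).
have L : #|riordan_paths (2 * k.+1 + m) k.+1 m| = cnt (sQ 0) (2 * k.+1 + m) k.+1 m.
  rewrite claim2 /riordan_paths (card_allw _ (fun w => [&& riordan w, count_mem U w == k.+1 & count_mem F w == m])) /cnt; apply: eq_count => w.
  by rewrite riordanE andbA.
have R : num_syt (hook2 k.+1 m) = cnt (sQ 0) (sumn (hook2 k.+1 m)) k.+1 m.
  rewrite /num_syt.
  have inj : {in [set t : SYT k.+1 m | is_syt t] &, injective (@Phi k.+1 m)}.
    by move=> t1 t2; rewrite !inE => s1 s2; apply: Phi_inj.
  rewrite -(card_in_imset inj).
  have -> : [set Phi t | t in [set t : SYT k.+1 m | is_syt t]] =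
            [set w : (sumn (hook2 k.+1 m)).-tuple step | Good k.+1 m w].
    apply/setP => w; rewrite inE; apply/imsetP/idP.
      by case=> t; rewrite inE => syt ->; apply: good_Phi.
    move=> g; exists (Psi j0 w).
      by rewrite inE; exact: (Psi_syt j0 x0 g (size_tuple w)).
    by apply: val_inj; rewrite (Phi_Psi j0 x0 g (size_tuple w)).
  rewrite (card_allw _ (Good k.+1 m)) /cnt; apply: eq_count => w.
  by rewrite goodE // andbA.
by rewrite L R sumn_hook.
Qed.
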